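(* Suppose the LP relaxation has a unique optimal solution $y^*$ and $y^*(s,1)+y^*(s,0)>0$ for all $s\in\mathbb S$. Then there is a constant $\epsilon_0>0$, depending only on $(\mathbb S,P,r,\alpha)$, such that for every $N$, every policy $\pi$ for the $N$-armed problem and every initial state vector $\mathbf S_0$ for which the long-run averages below exist, $$R^{\mathrm{rel}}-R(\pi,\mathbf S_0)\ge\epsilon_0\lim_{T\to\infty}\frac1T\sum_{t=0}^{T-1}\mathbb E\big[d_{\mathrm{IC}}(Y^\pi_t)\big].$$
   Context: Single-armed MDP $(\mathbb S,\{0,1\},P,r)$, finite $\mathbb S$, budget $\alpha\in(0,1)$. $N$-armed problem ($\alpha N$ integer): arms transition independently by $P$ given states and actions; a policy chooses $A_t(i)\in\{0,1\}$ with $\sum_iA_t(i)=\alpha N$. $R(\pi,\mathbf S_0)=\lim_{T\to\infty}\frac1T\sum_{t<T}\frac1N\sum_i\mathbb E[r(S_t(i),A_t(i))]$. $Y^\pi_t(s,a)=\frac1N\#\{i:S_t(i)=s,A_t(i)=a\}$. LP relaxation: maximize $\sum_{s,a}r(s,a)y(s,a)$ over $y\ge0$ s.t. $\sum_sy(s,1)=\alpha$, $\sum_{s',a}y(s',a)P(s',a,s)=\sum_ay(s,a)$ for all $s$, $\sum_{s,a}y(s,a)=1$; $R^{\mathrm{rel}}$ its optimal value. $S^+=\{s:y^*(s,1)>0,y^*(s,0)=0\}$, $S^-=\{s:y^*(s,1)=0,y^*(s,0)>0\}$, and $d_{\mathrm{IC}}(y)=\sum_{s\in S^+}y(s,0)+\sum_{s\in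 S^-}y(s,1)$. *)

(* Defs.v *)
From mathcomp Require Import all_boot all_order all_algebra.
From mathcomp Require Import all_classical all_reals all_analysis.
Set Implicit Arguments. Unset Strict Implicit. Unset Printing Implicit Defensive.
Import Order.TTheory GRing.Theory Num.Theory.
Import numFieldNormedType.Exports.
Local Open Scope ring_scope.

Section RestlessDefs.
Variables (R : realType) (S : finType).

(** ---- Single-armed MDP (S, {0,1}, P, r); action 1 = true, 0 = false ---- *)
Definition is_kernel (P : S -> bool -> S -> R) :=
  (forall s a s', 0 <= P s a s') /\ (forall s a, \sum_(s' : S) P s a s' = 1).

Definition lp_feasible (P : S -> bool -> S -> R) (alpha : R) (y : S -> bool -> R) :=
  [/\ forall s a, 0 <= y s a,
      \sum_(s : S) y s true = alpha,
      forall s, \sum_(s' : S) \sum_(a : bool) y s' a * P s' a s = \sum_(a : bool) y s a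
    & \sum_(s : S) \sum_(a : bool) y s a = 1].

Definition lp_obj (r : S -> bool -> R) (y : S -> bool -> R) :=
  \sum_(s : S) \sum_(a : bool) r s a * y s a.

Definition lp_optimal P r alpha (y : S -> bool -> R) :=
  lp_feasible P alpha y /\ forall y', lp_feasible P alpha y' -> lp_obj r y' <= lp_obj r y.

Definition dIC (ystar : S -> bool -> R) (y : S -> bool -> R) : R :=
  \sum_(s : S | (0 < ystar s true) && (ystar s false == 0)) y s false
  + \sum_(s : S | (ystar s true == 0) && (0 < ystar s false)) y s true.

Definition svec (N : nat) := {ffun 'I_N -> S}.
Definition avec (N : nat) := {ffun 'I_N -> bool}.

(** exactly K = alpha N arms are activated *)
Definition budget_ok (N K : nat) (a : avec N) : bool := #|[set i | a i]| == K.

(** A (randomized, history-dependent) policy: given the past history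
    [(S_0,A_0); ...; (S_{t-1},A_{t-1})] and the current state vector S_t,
    the probability of choosing action vector A_t. *)
Definition policy (N : nat) := seq (svec N * avec N) -> svec N -> avec N -> R.

Definition valid_policy (N K : nat) (pi : policy N) :=
  forall h sv,
    [/\ forall av, 0 <= pi h sv av,
        \sum_(av : avec N) pi h sv av = 1
      & forall av, pi h sv av != 0 -> budget_ok K av].

Definition transN (P : S -> bool -> S -> R) (N : nat) (sv : svec N) (av : avec N)
  (sv' : svec N) : R := \prod_(i < N) P (sv i) (av i) (sv' i).

Definition path_prob (P : S -> bool -> S -> R) (N : nat) (pi : policy N) (S0 : svec N)
  (t : nat) (w : (t.+1).-tuple (svec N * avec N)) : R :=
  ((tnth w ord0).1 == S0)%:R
  * \prod_(k < t.+1) pi (take k w) (tnth w k).1 (tnth w k).2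
  * \prod_(k < t) transN P (tnth w (widen_ord (leqnSn t) k)).1
                           (tnth w (widen_ord (leqnSn t) k)).2
                           (tnth w (lift ord0 k)).1.

Definition expect_t (P : S -> bool -> S -> R) (N : nat) (pi : policy N) (S0 : svec N)
  (t : nat) (g : svec N -> avec N -> R) : R :=
  \sum_(w : (t.+1).-tuple (svec N * avec N))
     path_prob P pi S0 w * g (tnth w ord_max).1 (tnth w ord_max).2.

Definition Yfrac (N : nat) (sv : svec N) (av : avec N) (s : S) (a : bool) : R :=
  #|[set i | (sv i == s) && (av i == a)]|%:R / N%:R.

Definition avg_arm_reward (r : S -> bool -> R) (N : nat) (sv : svec N) (av : avec N) : R :=
  N%:R^-1 * \sum_(i < N) r (sv i) (av i).

Definition cesaro (u : nat -> R) : R^nat := fun T => T%:R^-1 * \sum_(t < T) u t.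

Definition reward_seq P r N (pi : policy N) S0 : R^nat :=
  cesaro (fun t => expect_t P pi S0 t (avg_arm_reward r (N:=N))).

Definition dIC_seq P (ystar : S -> bool -> R) N (pi : policy N) S0 : R^nat :=
  cesaro (fun t => expect_t P pi S0 t (fun sv av => dIC ystar (Yfrac sv av))).

End RestlessDefs.

(* Main.v *)
Require Import Defs.
From mathcomp Require Import all_boot all_order all_algebra.
From mathcomp Require Import all_classical all_reals all_analysis.
From mathcomp Require Import ring lra.
Import Order.TTheory GRing.Theory Num.Theory.
Import numFieldNormedType.Exports.
Local Open Scope ring_scope.

Section Generic.
Variable R : realType.

Lemma ex_lb_seq (T : eqType) (s : seq T) (Q : T -> R -> Prop) :
  (forall x m m', Q x m -> 0 < m' -> m' <= m -> Q x m') ->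
  (forall x, x \in s -> exists m, 0 < m /\ Q x m) ->
  exists m, 0 < m /\ forall x, x \in s -> Q x m.
Proof.
move=> Qmon; elim: s => [|x s IH] H.
  by exists 1; split => // x; rewrite in_nil.
have [m1 [m1p Q1]] := H x (mem_head _ _).
have [m2 [m2p Q2]] : exists m, 0 < m /\ forall y, y \in s -> Q y m.
  by apply: IH => y ys; apply: H; rewrite in_cons ys orbT.
exists (Num.min m1 m2); split; first by rewrite lt_min m1p m2p.
move=> y; rewrite in_cons => /orP [/eqP ->|ys].
  by apply: (Qmon _ m1) => //; [rewrite lt_min m1p m2p | rewrite ge_min lexx].
by apply: (Qmon _ m2); [exact: Q2| rewrite lt_min m1p m2p | rewrite ge_min lexx orbT].
Qed.

Lemma ex_lb_fin (T : finType) (Q : T -> R -> Prop) :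
  (forall x m m', Q x m -> 0 < m' -> m' <= m -> Q x m') ->
  (forall x, exists m, 0 < m /\ Q x m) ->
  exists m, 0 < m /\ forall x, Q x m.
Proof.
move=> Qmon H; have [m [mp Hm]] := @ex_lb_seq T (enum T) Q Qmon (fun x _ => H x).
by exists m; split => // x; apply: Hm; rewrite mem_enum.
Qed.

Lemma cont_sum (T : topologicalType) (J : finType) (F : J -> T -> R) :
  (forall j, continuous (F j)) -> continuous (fun x => \sum_j F j x).
Proof.
move=> H; apply: continuous_big => //.
exact: add_continuous.
Qed.

Lemma sum2_lin (I J : finType) (f g : I -> J -> R) (c : R) :
  \sum_(i : I) \sum_(j : J) (f i j + c * g i j) =
  \sum_(i : I) \sum_(j : J) f i j + c * \sum_(i : I) \sum_(j : J) g i j.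
Proof.
rewrite mulr_sumr -big_split /=; apply: eq_bigr => i _.
by rewrite mulr_sumr -big_split.
Qed.

Lemma sum1_lin (I : finType) (f g : I -> R) (c : R) :
  \sum_(i : I) (f i + c * g i) = \sum_(i : I) f i + c * \sum_(i : I) g i.
Proof. by rewrite mulr_sumr -big_split. Qed.

Lemma contZ (T : topologicalType) (f : T -> R) (c : R) :
  continuous f -> continuous (fun x => c * f x).
Proof. by move=> H x; apply: cvgM; [exact: cvg_cst | exact: H]. Qed.

Lemma contN (T : topologicalType) (f : T -> R) :
  continuous f -> continuous (fun x => - f x).
Proof. by move=> H x; apply: cvgN; exact: H. Qed.

Lemma contD (T : topologicalType) (f g : T -> R) :
  continuous f -> continuous g -> continuous (fun x => f x + g x).
Proof. by move=> H1 H2 x; apply: cvgD; [exact: H1 | exact: H2]. Qed.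

Lemma contB (T : topologicalType) (f g : T -> R) :
  continuous f -> continuous g -> continuous (fun x => f x - g x).
Proof. by move=> H1 H2 x; apply: cvgB; [exact: H1 | exact: H2]. Qed.

Lemma contNorm (T : topologicalType) (f : T -> R) :
  continuous f -> continuous (fun x => `|f x|).
Proof. by move=> H x; apply: cvg_norm; exact: H. Qed.

Lemma contMax (T : topologicalType) (f g : T -> R) :
  continuous f -> continuous g -> continuous (fun x => Num.max (f x) (g x)).
Proof. by move=> H1 H2 x; apply: (@continuous_max _ _ f g x); [exact: H1|exact: H2]. Qed.

Lemma cesaro_lin (S : finType) (c : S -> bool -> R) (y : nat -> S -> bool -> R) (T : nat) :
  T%:R^-1 * \sum_(t < T) \sum_(s : S) \sum_(a : bool) c s a * y t s a =
  \sum_(s : S) \sum_(a : bool) c s a * (T%:R^-1 * \sum_(t < T) y t s a).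
Proof.
transitivity (\sum_(t < T) \sum_(s : S) \sum_(a : bool) T%:R^-1 * (c s a * y t s a)).
  rewrite mulr_sumr; apply: eq_bigr => t _; rewrite mulr_sumr; apply: eq_bigr => s _.
  by rewrite mulr_sumr.
rewrite exchange_big /=; apply: eq_bigr => s _.
rewrite exchange_big /=; apply: eq_bigr => a _.
by rewrite mulr_sumr mulr_sumr; apply: eq_bigr => t _; ring.
Qed.

End Generic.
Section Key.
Variables (R : realType) (S : finType) (P : S -> bool -> S -> R)
  (r : S -> bool -> R) (alpha : R) (ystar : S -> bool -> R).
Hypothesis Hopt : lp_optimal P r alpha ystar.
Hypothesis Huniq : forall y, lp_optimal P r alpha y -> forall s a, y s a = ystar s a.

Definition gZ (u : S -> bool -> R) : R :=
  \sum_(s : S) \sum_(a : bool) (if ystar s a == 0 then u s a else 0).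

Definition flowres (u : S -> bool -> R) (s : S) : R :=
  \sum_(s' : S) \sum_(a : bool) u s' a * P s' a s - \sum_(a : bool) u s a.

Definition resF (u : S -> bool -> R) : R :=
  `|\sum_(s : S) u s true| + `|\sum_(s : S) \sum_(a : bool) u s a|
  + \sum_(s : S) `|flowres u s|.

Definition psi (u : S -> bool -> R) : R := Num.max (- lp_obj r u) (resF u).

Lemma resF_ge0 u : 0 <= resF u.
Proof.
rewrite /resF; apply: addr_ge0; first by apply: addr_ge0.
by apply: sumr_ge0 => s _.
Qed.

Lemma pos_psi u : (forall s a, ystar s a = 0 -> 0 <= u s a) ->
  (forall s a, `|u s a| <= 1) -> (exists s a, u s a != 0) -> 0 < psi u.
Proof.
move=> Hnn Hb [s0 [a0 Hne]].
rewrite ltNge; apply/negP; rewrite /psi ge_max => /andP [Hobj Hres].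
have Hres0 : resF u = 0 by apply/eqP; rewrite eq_le Hres resF_ge0.
have n1 := normr_ge0 (\sum_(s : S) u s true).
have n2 := normr_ge0 (\sum_(s : S) \sum_(a : bool) u s a).
have n3 : 0 <= \sum_(s : S) `|flowres u s| by apply: sumr_ge0.
move: Hres0; rewrite /resF => /eqP; rewrite paddr_eq0 ?addr_ge0 //.
move=> /andP [/eqP]; move/eqP; rewrite paddr_eq0 // => /andP [].
rewrite !normr_eq0 => /eqP hbud /eqP htot /eqP hflow.
have hfl : forall s, flowres u s = 0.
  move=> s; apply/eqP; rewrite -normr_eq0; apply/eqP.
  by move: s isT; apply: psumr_eq0P hflow => s _.
case: Hopt => [[ynn ybud yflow ytot] ymax].
have [t [tp Ht]] : exists t, 0 < t /\ forall p : S * bool, ystar p.1 p.2 != 0 -> t <= ystar p.1 p.2.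
  apply: (@ex_lb_fin R (S * bool)%type (fun p m => ystar p.1 p.2 != 0 -> m <= ystar p.1 p.2)).
    by move=> x m m' H m'p le h; apply: le_trans le (H h).
  move=> p; case: (eqVneq (ystar p.1 p.2) 0) => h.
    by exists 1; split => //; rewrite h eqxx.
  by exists (ystar p.1 p.2); split => //; rewrite lt_neqAle eq_sym h ynn.
pose c := t / 2.
have cp : 0 < c by rewrite /c divr_gt0.
pose y' := fun s a => ystar s a + c * u s a.
have fy' : lp_feasible P alpha y'.
  split.
  - move=> s a; rewrite /y'; case: (eqVneq (ystar s a) 0) => h.
      by rewrite h add0r mulr_ge0 ?(ltW cp) ?Hnn.
    have h1 := Ht (s, a) h; have := Hb s a; rewrite ler_norml => /andP [h2 h3].
    rewrite /c /= in h1 *; nra.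
  - by rewrite /y' sum1_lin ybud hbud mulr0 addr0.
  - move=> s; rewrite /y'.
    transitivity (\sum_s' \sum_a (ystar s' a * P s' a s + c * (u s' a * P s' a s))).
      by apply: eq_bigr => s' _; apply: eq_bigr => a _; ring.
    rewrite sum2_lin sum1_lin yflow; congr (_ + _); congr (_ * _).
    by apply/eqP; rewrite -subr_eq0; apply/eqP; apply: hfl.
  - by rewrite /y' sum2_lin ytot htot mulr0 addr0.
have oy' : lp_obj r y' = lp_obj r ystar + c * lp_obj r u.
  rewrite /lp_obj /y' -sum2_lin; apply: eq_bigr => s _; apply: eq_bigr => a _; ring.
have opt' : lp_optimal P r alpha y'.
  split => // y'' fy''; apply: le_trans (ymax _ fy'') _.
  rewrite oy' lerDl mulr_ge0 ?(ltW cp) //.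
  by rewrite -oppr_le0.
have := Huniq y' opt' s0 a0; rewrite /y' => /eqP; rewrite addrC -subr_eq0 addrK mulf_eq0.
by rewrite (negbTE Hne) orbF; apply/negP; rewrite gt_eqF.
Qed.

Import ArrowAsProduct.

Definition cur (v : (S * bool)%type -> R) : S -> bool -> R := fun s a => v (s, a).

Lemma proj_cont (p : (S * bool)%type) : continuous (fun v : (S * bool)%type -> R => v p).
Proof. exact: (@proj_continuous _ (fun _ => R) p). Qed.

Lemma psi_cont : continuous (fun v : (S * bool)%type -> R => psi (cur v)).
Proof.
rewrite /psi /cur /lp_obj /resF /flowres.
apply: contMax.
  apply: contN; apply: cont_sum => s; apply: cont_sum => a.
  by apply: contZ; apply: proj_cont.
apply: contD; first apply: contD.
- by apply: contNorm; apply: cont_sum => s; apply: proj_cont.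
- by apply: contNorm; apply: cont_sum => s; apply: cont_sum => a; apply: proj_cont.
- apply: cont_sum => s; apply: contNorm; apply: contB.
    apply: cont_sum => s'; apply: cont_sum => a.
    under [X in continuous X]funext do rewrite mulrC.
    by apply: contZ; apply: proj_cont.
  by apply: cont_sum => a; apply: proj_cont.
Qed.

Local Open Scope classical_set_scope.
Definition Af (j : (S * bool)%type) (b : bool) (i : (S * bool)%type) : set R :=
  if i == j then [set (if b then 1 else -1)]
  else if ystar i.1 i.2 == 0 then `[0, 1]%classic else `[-1, 1]%classic.

Definition face j b : set ((S * bool)%type -> R) := [set v | forall i, Af j b i (v i)].

Lemma face_bound j b : b || (ystar j.1 j.2 != 0) ->
  exists m, 0 < m /\ forall v, face j b v -> m <= psi (cur v).
Proof.
move=> hjb.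
have Hpos : forall v, face j b v -> 0 < psi (cur v).
  move=> v Hv; apply: pos_psi.
  - move=> s a h; have := Hv (s, a); rewrite /Af /cur; case: eqP => [e|ne].
      by move: hjb; rewrite -e /= h eqxx orbF => -> /= ->.
    by rewrite h eqxx /= in_itv /= => /andP [].
  - move=> s a; have := Hv (s, a); rewrite /Af /cur; case: eqP => [e|ne].
      by case: (b) => /= ->; rewrite ?normrN normr1.
    by case: ifP => _ /=; rewrite in_itv /= => /andP [h1 h2];
      rewrite ler_norml h2 andbT // (le_trans _ h1) // lerN10.
  - exists j.1, j.2; have := Hv j; rewrite /Af eqxx /cur -surjective_pairing /= => ->.
    by case: (b); rewrite ?oppr_eq0 oner_eq0.
have Hcomp : compact (face j b).
  apply: (@tychonoff _ (fun _ => R)) => i; rewrite /Af.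
  case: ifP => _; first exact: compact_set1.
  by case: ifP => _; exact: segment_compact.
pose f := fun v => (psi (cur v))^-1.
have Hfc : {within face j b, continuous f}.
  apply: continuous_in_subspaceT => v; rewrite inE => Hv.
  rewrite /f; apply: (@continuousV _ _ (fun v => psi (cur v))); first by rewrite gt_eqF // Hpos.
  exact: psi_cont.
have := compact_bounded (continuous_compact Hfc Hcomp).
rewrite /= /bounded_near => -[M [Mr HM]].
have HM1 := HM (`|M| + 1) (le_lt_trans (real_ler_norm Mr) (ltr_pwDr ltr01 (lexx _))).
have Mp : 0 < `|M| + 1 by apply: ltr_wpDl.
exists (`|M| + 1)^-1; split; first by rewrite invr_gt0.
move=> v Hv; have := HM1 (f v) (ex_intro2 _ _ v Hv erefl).
have fp : 0 < f v by rewrite /f invr_gt0 Hpos.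
rewrite /= gtr0_norm // => hf.
by rewrite -[psi _]invrK lef_pV2 ?posrE ?invr_gt0 ?Hpos.
Qed.

Lemma gZ_scale c w : gZ (fun s a => c * w s a) = c * gZ w.
Proof.
rewrite /gZ mulr_sumr; apply: eq_bigr => s _; rewrite mulr_sumr.
by apply: eq_bigr => a _; case: ifP => _; rewrite ?mulr0.
Qed.

Lemma obj_scale c w : lp_obj r (fun s a => c * w s a) = c * lp_obj r w.
Proof.
rewrite /lp_obj mulr_sumr; apply: eq_bigr => s _; rewrite mulr_sumr.
by apply: eq_bigr => a _; rewrite mulrCA.
Qed.

Lemma resF_scale c w : 0 <= c -> resF (fun s a => c * w s a) = c * resF w.
Proof.
move=> c0.
have hf : forall s, flowres (fun s a => c * w s a) s = c * flowres w s.
  move=> s; rewrite /flowres mulrBr mulr_sumr; congr (_ - _).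
    apply: eq_bigr => s' _; rewrite mulr_sumr; apply: eq_bigr => a _; by rewrite mulrA.
  by rewrite mulr_sumr.
rewrite /resF !mulrDr mulr_sumr; congr (_ + _ + _).
- by rewrite -mulr_sumr normrM ger0_norm.
- rewrite -[in RHS](ger0_norm c0) -normrM mulr_sumr; congr `|_|.
  by apply: eq_bigr => s _; rewrite mulr_sumr.
- by apply: eq_bigr => s _; rewrite hf normrM ger0_norm.
Qed.

Lemma key : exists eps C, 0 < eps /\ 0 <= C /\
  forall u : S -> bool -> R, (forall s a, ystar s a = 0 -> 0 <= u s a) ->
    eps * gZ u <= - lp_obj r u + C * resF u.
Proof.
have [m [mp Hm]] : exists m, 0 < m /\ forall j b, b || (ystar j.1 j.2 != 0) ->
    forall v, face j b v -> m <= psi (cur v).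
  pose Q := (fun (jb : (S * bool) * bool) m => jb.2 || (ystar jb.1.1 jb.1.2 != 0) ->
                 forall v, face jb.1 jb.2 v -> m <= psi (cur v)).
  have H0 : forall jb, exists m, 0 < m /\ Q jb m.
    move=> [j b]; case: (boolP (b || (ystar j.1 j.2 != 0))) => h.
      by have [m [mp Hm]] := face_bound j b h; exists m; split => // _.
    by exists 1; split => // h'; move: h; rewrite h'.
  have [m [mp Hm]] := @ex_lb_fin R ((S * bool) * bool)%type Q
    (fun x m m' H _ le h v hv => le_trans le (H h v hv)) H0.
  by exists m; split => // j b; exact: (Hm (j, b)).
pose G := \sum_(s : S) \sum_(a : bool) (1 : R).
pose Rb := \sum_(s : S) \sum_(a : bool) `|r s a|.
have G0 : 0 <= G by apply: sumr_ge0 => s _; apply: sumr_ge0.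
have Rb0 : 0 <= Rb by apply: sumr_ge0 => s _; apply: sumr_ge0.
pose eps := m / (G + 1); pose C := (Rb + m) / m.
have epsp : 0 < eps by rewrite divr_gt0 // ltr_wpDl.
have C0 : 0 <= C by rewrite divr_ge0 ?addr_ge0 // ltW.
exists eps, C; split => //; split => // u Hu.
have Hw : forall w : S -> bool -> R, (forall s a, `|w s a| <= 1) -> m <= psi w ->
    eps * gZ w <= - lp_obj r w + C * resF w.
  move=> w wb hpsi.
  have gb : gZ w <= G.
    apply: ler_sum => s _; apply: ler_sum => a _; case: ifP => _ //.
    exact: le_trans (ler_norm _) (wb s a).
  have ob : lp_obj r w <= Rb.
    apply: ler_sum => s _; apply: ler_sum => a _.
    apply: le_trans (ler_norm _) _; rewrite normrM.
    by rewrite -[X in _ <= X]mulr1 ler_wpM2l.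
  have eb : eps * gZ w <= m.
    apply: le_trans (ler_wpM2l (ltW epsp) gb) _.
    rewrite /eps mulrAC ler_pdivrMr ?ltr_wpDl // ler_wpM2l ?(ltW mp) //.
    by rewrite lerDl.
  have rb := resF_ge0 w.
  move: hpsi; rewrite /psi le_max => /orP [h|h].
    apply: le_trans eb _; apply: le_trans h _; rewrite lerDl mulr_ge0 //.
  apply: le_trans eb _.
  have : C * m <= C * resF w by rewrite ler_wpM2l.
  rewrite /C mulrAC mulfK ?gt_eqF //.
  lra.
case: (pickP (fun p : S * bool => u p.1 p.2 != 0)) => [i0 hi0 | hall]; last first.
  have -> : u = fun s a => 0 * u s a.
    apply/funext => s; apply/funext => a; rewrite mul0r.
    by have := hall (s, a); rewrite /= => /negbFE /eqP.
  by rewrite gZ_scale obj_scale resF_scale // !mul0r oppr0 add0r !mulr0.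
case: (@arg_maxP _ R _ i0 predT (fun p : S * bool => `|u p.1 p.2|) isT) => j _ Hj.
set lam := `|u j.1 j.2|.
have lamp : 0 < lam.
  by apply: lt_le_trans (Hj i0 isT); rewrite normr_gt0.
pose w := fun s a => lam^-1 * u s a.
have Hu' : u = fun s a => lam * w s a.
  by apply/funext => s; apply/funext => a; rewrite /w mulrA divff ?gt_eqF // mul1r.
have wb : forall s a, `|w s a| <= 1.
  move=> s a; rewrite /w normrM ger0_norm ?invr_ge0 ?(ltW lamp) //.
  by rewrite mulrC ler_pdivrMr // mul1r; exact: (Hj (s, a) isT).
have Hjb : (0 < u j.1 j.2) || (ystar j.1 j.2 != 0).
  case: (eqVneq (ystar j.1 j.2) 0) => h; rewrite ?orbT // orbF.
  have := Hu _ _ h; rewrite le_eqVlt => /orP [/eqP e|//].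
  by move: lamp; rewrite /lam -e normr0 ltxx.
have Hface : face j (0 < u j.1 j.2) (fun p => w p.1 p.2).
  move=> i; rewrite /Af; case: eqP => [->|ne].
    rewrite /w /lam /=; case: ltrP => h.
      by rewrite gtr0_norm // mulVf // gt_eqF.
    rewrite ler0_norm // invrN mulNr mulVf // lt_eqF //.
    by rewrite lt_neqAle h andbT; apply/negP => /eqP e; move: lamp; rewrite /lam e normr0 ltxx.
  case: ifP => hz /=; rewrite in_itv /=.
    rewrite mulr_ge0 ?invr_ge0 ?(ltW lamp) ?Hu //=; last exact/eqP.
    by have := wb i.1 i.2; apply: le_trans; exact: ler_norm.
  by have := wb i.1 i.2; rewrite ler_norml.
have hpsi := Hm j _ Hjb _ Hface.
have hpsi' : m <= psi w by exact: hpsi.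
clearbody w.
have := Hw w wb hpsi'.
rewrite Hu' gZ_scale obj_scale resF_scale ?(ltW lamp) // => h.
have := ler_wpM2l (ltW lamp) h.
rewrite mulrDr; nra.
Qed.


Lemma dIC_le_gZ (y : S -> bool -> R) : (forall s a, 0 <= y s a) -> dIC ystar y <= gZ y.
Proof.
move=> hy.
have -> : gZ y = \sum_(s : S) (if ystar s false == 0 then y s false else 0)
                 + \sum_(s : S) (if ystar s true == 0 then y s true else 0).
  rewrite /gZ -big_split /=; apply: eq_bigr => s _; rewrite big_bool /=; exact: addrC.
rewrite /dIC; apply: lerD.
  rewrite big_mkcond /=; apply: ler_sum => s _.
  by case: ifP => [/andP [_ ->] //|_]; case: ifP.
rewrite big_mkcond /=; apply: ler_sum => s _.
by case: ifP => [/andP [-> _] //|_]; case: ifP.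
Qed.

Lemma gZ_sub (y : S -> bool -> R) : gZ (fun s a => y s a - ystar s a) = gZ y.
Proof.
rewrite /gZ; apply: eq_bigr => s _; apply: eq_bigr => a _.
by case: ifP => // /eqP ->; rewrite subr0.
Qed.

Lemma obj_sub (y : S -> bool -> R) :
  lp_obj r (fun s a => y s a - ystar s a) = lp_obj r y - lp_obj r ystar.
Proof.
rewrite /lp_obj -sumrB; apply: eq_bigr => s _; rewrite -sumrB.
by apply: eq_bigr => a _; rewrite mulrBr.
Qed.

Lemma resF_sub (y : S -> bool -> R) :
  \sum_(s : S) y s true = alpha -> \sum_(s : S) \sum_(a : bool) y s a = 1 ->
  resF (fun s a => y s a - ystar s a) = \sum_(s : S) `|flowres y s|.
Proof.
case: Hopt => [[ynn ybud yflow ytot] _] hb ht.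
rewrite /resF sumrB hb ybud subrr normr0 add0r.
have -> : \sum_(s : S) \sum_(a : bool) (y s a - ystar s a) = 0.
  by rewrite -[RHS](subrr 1) -{1}ht -ytot -sumrB; apply: eq_bigr => s _; rewrite sumrB.
rewrite normr0 add0r; apply: eq_bigr => s _; congr `|_|.
rewrite /flowres.
transitivity ((\sum_(s' : S) \sum_(a : bool) y s' a * P s' a s - \sum_(a : bool) y s a)
  - (\sum_(s' : S) \sum_(a : bool) ystar s' a * P s' a s - \sum_(a : bool) ystar s a)); last first.
  by rewrite yflow subrr subr0.
have e1 : \sum_(s' : S) \sum_(a : bool) (y s' a - ystar s' a) * P s' a s =
    \sum_(s' : S) \sum_(a : bool) y s' a * P s' a s - \sum_(s' : S) \sum_(a : bool) ystar s' a * P s' a s.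
  rewrite -sumrB; apply: eq_bigr => s' _; rewrite -sumrB; apply: eq_bigr => a _.
  by rewrite mulrBl.
by rewrite e1 sumrB; ring.
Qed.

Definition cI (s : S) (a : bool) : R :=
  if a then ((ystar s true == 0) && (0 < ystar s false))%:R
  else ((0 < ystar s true) && (ystar s false == 0))%:R.

Lemma dIC_lin (y : S -> bool -> R) :
  dIC ystar y = \sum_(s : S) \sum_(a : bool) cI s a * y s a.
Proof.
rewrite [RHS](eq_bigr (fun s => cI s true * y s true + cI s false * y s false));
  last by move=> s _; rewrite big_bool.
rewrite big_split /= addrC /dIC; congr (_ + _); rewrite big_mkcond /=;
  apply: eq_bigr => s _; rewrite /cI; case: ifP => _; rewrite ?mul1r ?mul0r //.
Qed.

End Key.

Section Tup.
Variable R : realType.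

Lemma big_tuple_rcons (T : finType) n (F : n.+2.-tuple T -> R) :
  \sum_(w : n.+2.-tuple T) F w =
  \sum_(w : n.+1.-tuple T) \sum_(x : T) F [tuple of rcons w x].
Proof.
rewrite pair_bigA /=.
pose h := fun p : n.+1.-tuple T * T => [tuple of rcons p.1 p.2].
pose g := fun w : n.+2.-tuple T =>
  ([tuple of belast (thead w) (behead w)], last (thead w) (behead w)).
rewrite (reindex h) //.
exists g.
  move=> [w x] _; rewrite /g /h /=.
  case/tupleP: w => w0 ws; rewrite /thead (tnth_nth w0) /=.
  congr (_, _).
    by apply: val_inj => /=; rewrite belast_rcons.
  by rewrite /= last_rcons.
move=> w _; case/tupleP: w => x t; rewrite /g /h /=; apply: val_inj => /=.
by rewrite -lastI.
Qed.
End Tup.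

Section Stoch.
Variables (R : realType) (S : finType) (P : S -> bool -> S -> R) (N : nat)
  (pi : policy R S N) (S0 : svec S N).

Local Notation T := (svec S N * avec N)%type.

Lemma tnth_rcons t (w : (t.+1).-tuple T) (x : T) (i : 'I_t.+2) :
  tnth [tuple of rcons w x] i = if (i < t.+1)%N then nth x w i else x.
Proof.
rewrite (tnth_nth x) /= nth_rcons size_tuple.
case: ltnP => // h; have -> : nat_of_ord i = t.+1 by apply/eqP; rewrite eqn_leq h -ltnS ltn_ord.
by rewrite eqxx.
Qed.

Lemma pp_rcons t (w : (t.+1).-tuple T) (x : T) :
  path_prob P pi S0 [tuple of rcons w x] =
  path_prob P pi S0 w * pi w x.1 x.2 * transN P (tnth w ord_max).1 (tnth w ord_max).2 x.1.
Proof.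
have htake : forall k, (k <= t.+1)%N -> take k (rcons w x) = take k w.
  by move=> k hk; rewrite -cats1 takel_cat // size_tuple.
have e1 : take t.+1 (rcons w x) = w.
  by rewrite htake // take_oversize // size_tuple.
have Epi : \prod_(k < t.+2) pi (take k [tuple of rcons w x])
      (tnth [tuple of rcons w x] k).1 (tnth [tuple of rcons w x] k).2 =
    \prod_(k < t.+1) pi (take k w) (tnth w k).1 (tnth w k).2 * pi w x.1 x.2.
  rewrite big_ord_recr /=; congr (_ * _); last by rewrite e1 tnth_rcons /= ltnn.
  apply: eq_bigr => i _; rewrite tnth_rcons /= ltn_ord htake ?(tnth_nth x) // ltnW //.
have Etr : \prod_(k < t.+1) transN P
      (tnth [tuple of rcons w x] (widen_ord (leqnSn t.+1) k)).1
      (tnth [tuple of rcons w x] (widen_ord (leqnSn t.+1) k)).2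
      (tnth [tuple of rcons w x] (lift ord0 k)).1 =
    \prod_(k < t) transN P (tnth w (widen_ord (leqnSn t) k)).1
                           (tnth w (widen_ord (leqnSn t) k)).2
                           (tnth w (lift ord0 k)).1 *
    transN P (tnth w ord_max).1 (tnth w ord_max).2 x.1.
  rewrite big_ord_recr /=; congr (_ * _).
    apply: eq_bigr => k _; rewrite !tnth_rcons /= !(tnth_nth x) /=.
    by rewrite (ltn_trans (ltn_ord k)) // ltnS ltn_ord.
  by rewrite !tnth_rcons /= ltnSn ltnn !(tnth_nth x).
have E0 : tnth [tuple of rcons w x] ord0 = tnth w ord0.
  by rewrite tnth_rcons /= (tnth_nth x).
rewrite /path_prob Epi Etr E0.
ring.
Qed.


Lemma card_sumR (p : pred 'I_N) : #|[set i | p i]|%:R = \sum_(i < N) (p i)%:R :> R.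
Proof.
rewrite (eq_bigr (fun i => if p i then 1 else 0)); last by move=> i _; case: (p i).
rewrite -big_mkcond /= sumr_const cardsE.
by congr (_%:R); apply: eq_card => i; rewrite !inE.
Qed.

Lemma Yfrac_sum (sv : svec S N) (av : avec N) (f : S -> bool -> R) :
  \sum_(s : S) \sum_(a : bool) Yfrac R sv av s a * f s a =
  N%:R^-1 * \sum_(i < N) f (sv i) (av i).
Proof.
rewrite /Yfrac mulr_sumr.
transitivity (\sum_(s : S) \sum_(a : bool) \sum_(i < N)
    N%:R^-1 * (((sv i == s) && (av i == a))%:R * f s a)).
  apply: eq_bigr => s _; apply: eq_bigr => a _.
  by rewrite card_sumR -mulr_sumr -mulr_suml; ring.
under eq_bigr do rewrite exchange_big.
rewrite exchange_big /=; apply: eq_bigr => i _.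
rewrite (bigD1 (sv i)) //= [X in _ + X]big1; last first.
  move=> s hs; apply: big1 => a _; rewrite eq_sym (negbTE hs) /=; ring.
rewrite addr0 (bigD1 (av i)) //= [X in _ + X]big1; last first.
  by move=> a /negbTE ha; rewrite !eqxx eq_sym ha /=; ring.
by rewrite !eqxx /=; ring.
Qed.


Hypothesis HP : is_kernel P.

Lemma transN_sum sv av : \sum_(sv' : svec S N) transN P sv av sv' = 1.
Proof.
rewrite /transN -(bigA_distr_bigA (fun i s' => P (sv i) (av i) s')) /=.
by apply: big1 => i _; case: HP => _ ->.
Qed.

Lemma transN_marg sv av (j : 'I_N) s :
  \sum_(sv' : svec S N) transN P sv av sv' * (sv' j == s)%:R = P (sv j) (av j) s.
Proof.
pose F := fun (i : 'I_N) (x : S) => P (sv i) (av i) x * (if i == j then (x == s)%:R else 1).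
transitivity (\sum_(sv' : svec S N) \prod_(i < N) F i (sv' i)).
  apply: eq_bigr => sv' _; rewrite /F /transN big_split /=; congr (_ * _).
  rewrite -big_mkcond /=.
  by rewrite (big_pred1 j) //= => i; rewrite /= eq_sym.
rewrite -(bigA_distr_bigA F) /= (bigD1 j) //= [X in _ * X]big1; last first.
  move=> i hij; rewrite /F (negbTE hij).
  by under eq_bigr do rewrite mulr1; case: HP => _ ->.
rewrite mulr1 /F eqxx (bigD1 s) //= eqxx mulr1 big1 ?addr0 //.
by move=> x hx; rewrite (negbTE hx) mulr0.
Qed.

Variable K : nat.
Hypothesis Hvalid : valid_policy K pi.

Lemma pi_sum h sv : \sum_(av : avec N) pi h sv av = 1.
Proof. by case: (Hvalid h sv). Qed.

Lemma expect_ext t (g g' : svec S N -> avec N -> R) :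
  (forall sv av, g sv av = g' sv av) -> expect_t P pi S0 t g = expect_t P pi S0 t g'.
Proof. by move=> H; apply: eq_bigr => w _; rewrite H. Qed.

Lemma expect_step t (G : svec S N -> R) :
  expect_t P pi S0 t.+1 (fun sv _ => G sv) =
  expect_t P pi S0 t (fun sv av => \sum_(sv' : svec S N) transN P sv av sv' * G sv').
Proof.
rewrite /expect_t big_tuple_rcons; apply: eq_bigr => w _.
transitivity (\sum_(sv : svec S N) \sum_(av : avec N)
  path_prob P pi S0 w * pi w sv av * transN P (tnth w ord_max).1 (tnth w ord_max).2 sv * G sv).
  rewrite pair_bigA /=; apply: eq_bigr => [[sv av]] _.
  by rewrite pp_rcons tnth_rcons /= ltnn.
rewrite mulr_sumr; apply: eq_bigr => sv _.
transitivity (\sum_(av : avec N) pi w sv av *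
  (path_prob P pi S0 w * transN P (tnth w ord_max).1 (tnth w ord_max).2 sv * G sv)).
  by apply: eq_bigr => av _; ring.
by rewrite -mulr_suml pi_sum mul1r; ring.
Qed.

Lemma expect_one t : expect_t P pi S0 t (fun _ _ => 1) = 1.
Proof.
elim: t => [|t IH].
  rewrite /expect_t.
  rewrite (reindex (fun x : T => [tuple x])); last first.
    exists (fun w : 1.-tuple T => thead w) => [x _ //|w _].
    by case/tupleP: w => x t; rewrite theadE; apply: val_inj => /=; rewrite tuple0.
  transitivity (\sum_(sv : svec S N) \sum_(av : avec N) ((sv == S0)%:R * pi [::] sv av)).
    rewrite pair_bigA; apply: eq_bigr => [[sv av]] _.
    by rewrite /path_prob big_ord1 big_ord0 !(tnth_nth (sv, av)) /= !mulr1.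
  rewrite (bigD1 S0) //= [X in _ + X]big1; last first.
    by move=> sv hsv; apply: big1 => av _; rewrite (negbTE hsv) mul0r.
  by rewrite addr0 eqxx; under eq_bigr do rewrite mul1r; rewrite pi_sum.
rewrite expect_step -[RHS]IH; apply: expect_ext => sv av.
by under eq_bigr do rewrite mulr1; rewrite transN_sum.
Qed.

Lemma pp_ge0 t (w : (t.+1).-tuple T) : 0 <= path_prob P pi S0 w.
Proof.
rewrite /path_prob; apply: mulr_ge0; first apply: mulr_ge0.
- by case: eqP.
- by apply: prodr_ge0 => k _; case: (Hvalid (take k w) (tnth w k).1).
- apply: prodr_ge0 => k _; apply: prodr_ge0 => i _.
  by case: HP => ->.
Qed.

Lemma pp_budget t (w : (t.+1).-tuple T) :
  path_prob P pi S0 w != 0 -> budget_ok K (tnth w ord_max).2.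
Proof.
move=> hne; apply/negPn/negP => hb.
have h0 : pi (take (@ord_max t) w) (tnth w ord_max).1 (tnth w ord_max).2 = 0.
  case: (eqVneq (pi (take (@ord_max t) w) (tnth w ord_max).1 (tnth w ord_max).2) 0) => // h.
  by case: (Hvalid (take (@ord_max t) w) (tnth w ord_max).1) => _ _ /(_ _ h) h'; rewrite h' in hb.
by move: hne; rewrite /path_prob (bigD1 (@ord_max t)) //= h0 mul0r mulr0 mul0r eqxx.
Qed.

Lemma expect_supp t (g g' : svec S N -> avec N -> R) :
  (forall sv av, budget_ok K av -> g sv av = g' sv av) ->
  expect_t P pi S0 t g = expect_t P pi S0 t g'.
Proof.
move=> H; apply: eq_bigr => w _.
case: (eqVneq (path_prob P pi S0 w) 0) => h; first by rewrite h !mul0r.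
by rewrite H // pp_budget.
Qed.

Lemma expect_scal t c (g : svec S N -> avec N -> R) :
  expect_t P pi S0 t (fun sv av => c * g sv av) = c * expect_t P pi S0 t g.
Proof. by rewrite /expect_t mulr_sumr; apply: eq_bigr => w _; ring. Qed.

Lemma expect_cst t c : expect_t P pi S0 t (fun _ _ => c) = c.
Proof.
rewrite -[RHS]mulr1 -(expect_one t) -expect_scal.
by apply: expect_ext => sv av; rewrite mulr1.
Qed.

Definition ybar t s a := expect_t P pi S0 t (fun sv av => Yfrac R sv av s a).

Lemma expect_lin t (c : S -> bool -> R) :
  expect_t P pi S0 t (fun sv av => \sum_(s : S) \sum_(a : bool) c s a * Yfrac R sv av s a) =
  \sum_(s : S) \sum_(a : bool) c s a * ybar t s a.
Proof.
rewrite /expect_t /ybar.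
transitivity (\sum_(w : (t.+1).-tuple T) \sum_(s : S) \sum_(a : bool)
   c s a * (path_prob P pi S0 w * Yfrac R (tnth w ord_max).1 (tnth w ord_max).2 s a)).
  apply: eq_bigr => w _; rewrite mulr_sumr; apply: eq_bigr => s _.
  rewrite mulr_sumr; apply: eq_bigr => a _; ring.
rewrite exchange_big; apply: eq_bigr => s _; rewrite exchange_big; apply: eq_bigr => a _.
by rewrite mulr_sumr.
Qed.

Lemma Yfrac_ge0 (sv : svec S N) (av : avec N) (s : S) (a : bool) : 0 <= Yfrac R sv av s a.
Proof. by rewrite /Yfrac divr_ge0. Qed.

Lemma ybar_ge0 t s a : 0 <= ybar t s a.
Proof. by apply: sumr_ge0 => w _; rewrite mulr_ge0 ?pp_ge0 ?Yfrac_ge0. Qed.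

Lemma Yfrac_sum' (sv : svec S N) (av : avec N) (f : S -> bool -> R) :
  \sum_(s : S) \sum_(a : bool) f s a * Yfrac R sv av s a =
  N%:R^-1 * \sum_(i < N) f (sv i) (av i).
Proof.
rewrite -Yfrac_sum; apply: eq_bigr => s _; apply: eq_bigr => a _; exact: mulrC.
Qed.

Hypothesis HN : (0 < N)%N.
Variable alpha : R.
Hypothesis HK : K%:R = alpha * N%:R.

Lemma NR0 : N%:R != 0 :> R.
Proof. by rewrite pnatr_eq0 -lt0n. Qed.

Lemma ybar_tot t : \sum_(s : S) \sum_(a : bool) ybar t s a = 1.
Proof.
transitivity (\sum_(s : S) \sum_(a : bool) 1 * ybar t s a).
  by apply: eq_bigr => s _; apply: eq_bigr => a _; rewrite mul1r.
rewrite -expect_lin -[RHS](expect_one t); apply: expect_ext => sv av.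
by rewrite Yfrac_sum' sumr_const card_ord mulVf // NR0.
Qed.

Lemma ybar_bud t : \sum_(s : S) ybar t s true = alpha.
Proof.
transitivity (\sum_(s : S) \sum_(a : bool) (a : bool)%:R * ybar t s a).
  by apply: eq_bigr => s _; rewrite big_bool /= mul1r mul0r addr0.
rewrite -expect_lin -[RHS](expect_cst t alpha); apply: expect_supp => sv av hb.
rewrite Yfrac_sum' -card_sumR.
by move/eqP: hb => ->; rewrite HK mulrC -mulrA mulfV ?NR0 // mulr1.
Qed.

Lemma ybar_flow t s :
  \sum_(a : bool) ybar t.+1 s a = \sum_(s' : S) \sum_(a : bool) ybar t s' a * P s' a s.
Proof.
transitivity (\sum_(s' : S) \sum_(a : bool) (s' == s)%:R * ybar t.+1 s' a).
  rewrite (bigD1 s) //= [X in _ = _ + X]big1; last first.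
    by move=> s' hs; apply: big1 => a _; rewrite (negbTE hs) mul0r.
  by rewrite addr0; apply: eq_bigr => a _; rewrite eqxx mul1r.
rewrite -expect_lin.
transitivity (expect_t P pi S0 t.+1 (fun sv _ => N%:R^-1 * \sum_(i < N) (sv i == s)%:R)).
  by apply: expect_ext => sv av; rewrite Yfrac_sum'.
rewrite expect_step.
transitivity (\sum_(s' : S) \sum_(a : bool) P s' a s * ybar t s' a); last first.
  by apply: eq_bigr => s' _; apply: eq_bigr => a _; rewrite mulrC.
rewrite -expect_lin; apply: expect_ext => sv av.
rewrite Yfrac_sum'.
transitivity (N%:R^-1 * \sum_(i < N) \sum_(sv' : svec S N) transN P sv av sv' * (sv' i == s)%:R).
  transitivity (\sum_(sv' : svec S N) \sum_(i < N)
      N%:R^-1 * (transN P sv av sv' * (sv' i == s)%:R)).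
    apply: eq_bigr => sv' _; rewrite mulr_sumr mulr_sumr; apply: eq_bigr => i _; ring.
  by rewrite exchange_big mulr_sumr; apply: eq_bigr => i _; rewrite mulr_sumr.
by congr (_ * _); apply: eq_bigr => i _; rewrite transN_marg.
Qed.

Lemma ybar_obj t (r : S -> bool -> R) :
  expect_t P pi S0 t (avg_arm_reward r (N:=N)) = lp_obj r (ybar t).
Proof.
rewrite /lp_obj -expect_lin; apply: expect_ext => sv av.
by rewrite Yfrac_sum'.
Qed.

End Stoch.


Theorem mainTheorem9 (R : realType) (S : finType) (P : S -> bool -> S -> R)
  (r : S -> bool -> R) (alpha : R) (ystar : S -> bool -> R) :
  is_kernel P ->
  0 < alpha < 1 ->
  lp_optimal P r alpha ystar ->
  (forall y, lp_optimal P r alpha y -> forall s a, y s a = ystar s a) ->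
  (forall s, 0 < ystar s true + ystar s false) ->
  exists eps0 : R, 0 < eps0 /\
    forall (N K : nat) (pi : policy R S N) (S0 : svec S N),
      (0 < N)%N -> K%:R = alpha * N%:R -> valid_policy K pi ->
      cvgn (reward_seq P r pi S0) ->
      cvgn (dIC_seq P ystar pi S0) ->
      eps0 * limn (dIC_seq P ystar pi S0) <= lp_obj r ystar - limn (reward_seq P r pi S0).
Proof.
move=> HP Halpha Hopt Huniq _.
have [eps [C [epsp [C0 Hkey]]]] := key _ _ _ _ _ _ Hopt Huniq.
exists eps; split => // N K pi S0 HN HK Hval cR cD.
pose yb (T : nat) s a := T%:R^-1 * \sum_(t < T) ybar R S P N pi S0 t s a.
have hR : forall T, reward_seq P r pi S0 T = lp_obj r (yb T).
  move=> T; rewrite /reward_seq /Defs.cesaro /=.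
  under eq_bigr => t _ do rewrite ybar_obj.
  by rewrite /lp_obj cesaro_lin.
have hD : forall T, dIC_seq P ystar pi S0 T = dIC ystar (yb T).
  have e : forall t, expect_t P pi S0 t (fun sv av => dIC ystar (Yfrac R sv av)) =
      dIC ystar (ybar R S P N pi S0 t).
    move=> t; rewrite dIC_lin -expect_lin; apply: expect_ext => sv av; exact: dIC_lin.
  move=> T; rewrite /dIC_seq /Defs.cesaro /=.
  under eq_bigr => t _ do rewrite e dIC_lin.
  by rewrite cesaro_lin [RHS]dIC_lin.
pose D := (#|S|%:R : R).
have hbound : forall T, (0 < T)%N ->
    eps * dIC ystar (yb T) <= lp_obj r ystar - lp_obj r (yb T) + C * (D / T%:R).
  move=> T hT.
  have TR : T%:R != 0 :> R by rewrite pnatr_eq0 -lt0n.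
  have ybnn : forall s a, 0 <= yb T s a.
    move=> s a; rewrite /yb mulr_ge0 ?invr_ge0 //.
    by apply: sumr_ge0 => t _; exact: (ybar_ge0 R S P N pi S0 HP K Hval).
  have avg : forall c : R, T%:R^-1 * \sum_(t < T) c = c.
    by move=> c; rewrite sumr_const card_ord -[c *+ T]mulr_natr mulrCA mulVf // mulr1.
  have ybbud : \sum_(s : S) yb T s true = alpha.
    rewrite /yb -mulr_sumr exchange_big /=.
    under eq_bigr => t _ do rewrite (ybar_bud R S P N pi S0 HP K Hval HN alpha HK).
    exact: avg.
  have ybtot : \sum_(s : S) \sum_(a : bool) yb T s a = 1.
    transitivity (T%:R^-1 * \sum_(t < T) \sum_(s : S) \sum_(a : bool) 1 * ybar R S P N pi S0 t s a).
      rewrite cesaro_lin; apply: eq_bigr => s _; apply: eq_bigr => a _; by rewrite mul1r.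
    under eq_bigr => t _ do under eq_bigr => s _ do under eq_bigr => a _ do rewrite mul1r.
    under eq_bigr => t _ do rewrite (ybar_tot R S P N pi S0 HP K Hval HN).
    exact: avg.
  have hfl : forall s, `|flowres R S P (yb T) s| <= T%:R^-1.
    move=> s.
    pose q t := \sum_(a : bool) ybar R S P N pi S0 t s a.
    have q01 : forall t, 0 <= q t <= 1.
      move=> t; rewrite sumr_ge0 /=; last by move=> a _; exact: (ybar_ge0 R S P N pi S0 HP K Hval).
      rewrite -(ybar_tot R S P N pi S0 HP K Hval HN t) (bigD1 s) //= lerDl.
      by apply: sumr_ge0 => s' _; apply: sumr_ge0 => a _; exact: (ybar_ge0 R S P N pi S0 HP K Hval).
    have -> : flowres R S P (yb T) s = T%:R^-1 * (q T - q 0).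
      rewrite -(telescope_sumr _ (leq0n T)) big_mkord /q.
      transitivity (T%:R^-1 * \sum_(t < T) (\sum_(s' : S) \sum_(a : bool) P s' a s * ybar R S P N pi S0 t s' a
          - \sum_(a : bool) ybar R S P N pi S0 t s a)).
        rewrite /flowres /yb sumrB mulrBr; congr (_ - _).
          rewrite cesaro_lin; apply: eq_bigr => s' _; apply: eq_bigr => a _; ring.
        by rewrite exchange_big mulr_sumr.
      congr (_ * _); apply: eq_bigr => t _; rewrite (ybar_flow R S P N pi S0 HP K Hval); congr (_ - _).
      by apply: eq_bigr => s' _; apply: eq_bigr => a _; rewrite mulrC.
    rewrite normrM ger0_norm ?invr_ge0 // -[X in _ <= X]mulr1 ler_wpM2l ?invr_ge0 //.
    have := q01 T; have := q01 0%N; rewrite ler_norml; lra.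
  pose u := fun s a => yb T s a - ystar s a.
  have hu : forall s a, ystar s a = 0 -> 0 <= u s a.
    by move=> s a h; rewrite /u h subr0.
  have := Hkey u hu.
  rewrite /u gZ_sub obj_sub (resF_sub _ _ _ _ _ _ Hopt) //.
  move=> H.
  have H1 : eps * dIC ystar (yb T) <= eps * gZ R S ystar (yb T).
    by rewrite ler_wpM2l ?(ltW epsp) // dIC_le_gZ.
  have H2 : C * \sum_(s : S) `|flowres R S P (yb T) s| <= C * (D / T%:R).
    rewrite ler_wpM2l //; apply: le_trans (ler_sum _ (fun s _ => hfl s)) _.
    by rewrite sumr_const -[X in X <= _]mulr_natr /D mulrC.
  lra.
have cg : ((fun T => eps * dIC_seq P ystar pi S0 T + reward_seq P r pi S0 T) @ \oo -->
    eps * limn (dIC_seq P ystar pi S0) + limn (reward_seq P r pi S0))%classic.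
  apply: cvgD; last exact: cR.
  apply: cvgM; [exact: cvg_cst | exact: cD].
suff H : eps * limn (dIC_seq P ystar pi S0) + limn (reward_seq P r pi S0) <= lp_obj r ystar.
  by lra.
apply/ler_addgt0Pr => d dp.
apply: (cvgr_to_le cg).
have Mdef : C * D / d < ((Num.Def.trunc (C * D / d)).+1)%:R := truncnS_gt _.
near=> T.
have hT : ((Num.Def.trunc (C * D / d)).+1 <= T)%N by near: T; exact: nbhs_infty_ge.
have T0 : (0 < T)%N by apply: leq_trans hT.
rewrite /= hD hR.
have := hbound T T0.
have h1 : C * D / d < T%:R by apply: lt_le_trans Mdef _; rewrite ler_nat.
rewrite ltr_pdivrMr // in h1.
have : C * (D / T%:R) <= d.
  by rewrite mulrA ler_pdivrMr ?ltr0n //; nra.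
lra.
Unshelve. all: by end_near.
Qed.
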